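(* Let $m\ge1$, $\tilde{\mathbf{x}}\in\mathbb{R}^m$, $\hat{\mathbf{b}}\in\Delta_m:=\{\mathbf{b}\in\mathbb{R}^m:\mathbf{b}\ge\mathbf{0},\ \mathbf{b}^\top\mathbf{1}=1\}$, $\lambda>0$, $0\le\gamma<1$, $\kappa\ge 0$, and let $\boldsymbol{\Sigma}\in\mathbb{R}^{m\times m}$ be symmetric positive definite with Cholesky factorization $\boldsymbol{\Sigma}=\mathbf{U}^\top\mathbf{U}$ ($\mathbf{U}$ upper triangular). Let $\sigma=\sqrt{\sum_{i=1}^m\sigma_i^2}$ where $\sigma_i^2$ are the diagonal entries of $\boldsymbol{\Sigma}$, and assume $\max_i \tilde{x}_i>\kappa\sigma+\lambda$. Define the ellipsoid $\mathcal{U}=\{\mathbf{x}\in\mathbb{R}^m:(\mathbf{x}-\tilde{\mathbf{x}})^\top\boldsymbol{\Sigma}^{-1}(\mathbf{x}-\tilde{\mathbf{x}})\le\kappa^2\}$ and the robust problem $$\text{(R)}\qquad \max_{w\ge0,\ \mathbf{b}\ge\mathbf{0}}\ \min_{\mathbf{x}\in\mathcal{U}}\{w\,\mathbf{b}^\top\mathbf{x}\}-\lambda\|\hat{\mathbf{b}}-w\mathbf{b}\|_1\quad\text{s.t.}\quad w+\gamma\|\hat{\mathbf{b}}-w\mathbf{b}\|_1=1,\ \ \mathbf{b}^\top\mathbf{1}=1,$$ and the second-order cone program $$\text{(S)}\qquad \max_{\mathbf{b}\ge\mathbf{0}}\ \mathbf{b}^\top\tilde{\mathbf{x}}-\lambda\|\hat{\mathbf{b}}-\mathbf{b}\|_1-\kappa\|\mathbf{U}\mathbf{b}\|_2\quad\text{s.t.}\quad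 \mathbf{b}^\top\mathbf{1}+\gamma\|\hat{\mathbf{b}}-\mathbf{b}\|_1\le1 .$$ Let $\mathbf{b}^*$ be an optimal solution of (S). Then $\big(\mathbf{1}^\top\mathbf{b}^*,\ \mathbf{b}^*/\mathbf{1}^\top\mathbf{b}^*\big)$ is an optimal solution of (R).
   Context: $\|\cdot\|_1,\|\cdot\|_2$ are the $\ell_1$ and Euclidean norms, $\mathbf{1}$ the all-ones vector, vector inequalities componentwise. $\tilde{\mathbf{x}}$ plays the role of a predicted price-relative vector, $\gamma$ a proportional transaction cost rate, $\lambda$ a rebalancing penalty and $\kappa$ the size of the uncertainty set. *)

(* Defs.v *)
From HB Require Import structures.
From mathcomp Require Import all_boot all_order all_algebra.
From mathcomp Require Import classical_sets reals.
Set Implicit Arguments. Unset Strict Implicit. Unset Printing Implicit Defensive.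
Import Order.TTheory GRing.Theory Num.Theory.
Local Open Scope ring_scope.
Local Open Scope classical_set_scope.

Section Defs.
Variables (R : realType) (m : nat).
Implicit Types (v b x : 'cV[R]_m) (S U : 'M[R]_m).

Definition nonneg v : Prop := forall i, 0 <= v i 0.
Definition sum1 v : R := \sum_i v i 0.
Definition norm1 v : R := \sum_i `|v i 0|.
Definition norm2 v : R := Num.sqrt (\sum_i (v i 0) ^+ 2).
Definition dotp b x : R := (b^T *m x) 0 0.

Definition simplex v : Prop := nonneg v /\ sum1 v = 1.

Definition sym_pos_def S : Prop :=
  S^T = S /\ forall v, v != 0 -> 0 < (v^T *m S *m v) 0 0.

Definition cholesky_factor S U : Prop :=
  S = U^T *m U /\ (forall i j : 'I_m, (j < i)%N -> U i j = 0)
  /\ (forall i, 0 < U i i).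

Definition sigma_tot S : R := Num.sqrt (\sum_i S i i).

Definition ellipsoid S xt (kappa : R) : set 'cV[R]_m :=
  [set x | ((x - xt)^T *m invmx S *m (x - xt)) 0 0 <= kappa ^+ 2].

Definition R_feasible (gamma : R) bh (w : R) b : Prop :=
  0 <= w /\ nonneg b /\ w + gamma * norm1 (bh - w *: b) = 1 /\ sum1 b = 1.

Definition R_obj S xt kappa lambda bh (w : R) b : R :=
  inf [set w * dotp b x | x in ellipsoid S xt kappa]
  - lambda * norm1 (bh - w *: b).

Definition R_optimal S xt kappa lambda gamma bh (w : R) b : Prop :=
  R_feasible gamma bh w b /\
  forall w' b', R_feasible gamma bh w' b' ->
    R_obj S xt kappa lambda bh w' b' <= R_obj S xt kappa lambda bh w b.

Definition S_feasible (gamma : R) bh b : Prop :=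
  nonneg b /\ sum1 b + gamma * norm1 (bh - b) <= 1.

Definition S_obj U xt (kappa lambda : R) bh b : R :=
  dotp b xt - lambda * norm1 (bh - b) - kappa * norm2 (U *m b).

Definition S_optimal U xt kappa lambda gamma bh b : Prop :=
  S_feasible gamma bh b /\
  forall b', S_feasible gamma bh b' ->
    S_obj U xt kappa lambda bh b' <= S_obj U xt kappa lambda bh b.

End Defs.

(* Main.v *)
Require Import Defs.
From HB Require Import structures.
From mathcomp Require Import all_boot all_order all_algebra.
From mathcomp Require Import classical_sets reals.
From mathcomp Require Import ring lra.
Import Order.TTheory GRing.Theory Num.Theory.
Set Implicit Arguments. Unset Strict Implicit.
Local Open Scope ring_scope.

Section Aux.
Variables (R : realType) (m : nat).

Lemma dotpE (b x : 'cV[R]_m) : dotp b x = \sum_i b i 0 * x i 0.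
Proof. by rewrite /dotp !mxE; apply: eq_bigr => i _; rewrite !mxE. Qed.

Lemma sum_sq_ge0 (f : 'I_m -> R) : 0 <= \sum_i f i ^+ 2.
Proof. by apply: sumr_ge0 => i _; apply: sqr_ge0. Qed.

Lemma sum_sq_eq0 (f : 'I_m -> R) : \sum_i f i ^+ 2 <= 0 -> forall i, f i = 0.
Proof.
move=> h i; have h0 : \sum_i f i ^+ 2 = 0 by apply/le_anti; rewrite h sum_sq_ge0.
have := @psumr_eq0P _ _ predT (fun j => f j ^+ 2) (fun j _ => sqr_ge0 (f j)) h0 i isT.
by move/eqP; rewrite sqrf_eq0 => /eqP.
Qed.

Lemma CS_lb (a y : 'I_m -> R) (k : R) : 0 <= k -> \sum_i y i ^+ 2 <= k ^+ 2 ->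
  - (k * Num.sqrt (\sum_i a i ^+ 2)) <= \sum_i a i * y i.
Proof.
move=> hk hy.
set N := Num.sqrt _.
have hN0 : 0 <= N by apply: sqrtr_ge0.
have hN2 : N ^+ 2 = \sum_i a i ^+ 2 by rewrite sqr_sqrtr // sum_sq_ge0.
case: (eqVneq k 0) => [k0|kn0].
  subst k; rewrite mul0r oppr0.
  have y0 : forall i, y i = 0 by apply: sum_sq_eq0; rewrite expr0n in hy.
  by rewrite big1 // => i _; rewrite y0 mulr0.
case: (eqVneq N 0) => [N0|Nn0].
  have a0 : forall i, a i = 0 by apply: sum_sq_eq0; rewrite -hN2 N0 expr0n.
  by rewrite big1 ?N0 ?mulr0 ?oppr0 // => i _; rewrite a0 mul0r.
have hQ : 0 <= \sum_i (N * y i + k * a i) ^+ 2 by apply: sum_sq_ge0.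
have E : \sum_i (N * y i + k * a i) ^+ 2 =
   N ^+ 2 * \sum_i y i ^+ 2 + 2 * k * N * \sum_i a i * y i + k ^+ 2 * \sum_i a i ^+ 2.
  rewrite !mulr_sumr -!big_split /=; apply: eq_bigr => i _; ring.
rewrite E in hQ.
rewrite -hN2 in hQ.
have kp : 0 < k by rewrite lt_def kn0 hk.
have Np : 0 < N by rewrite lt_def Nn0 hN0.
set P := \sum_i a i * y i in hQ *.
set S := \sum_i y i ^+ 2 in hQ hy.
have h1 : 0 <= (P + k * N) * (2 * k * N) by nra.
have h2 : 0 < 2 * k * N by rewrite !mulr_gt0.
rewrite pmulr_lge0 // in h1; lra.
Qed.

Lemma CS_ub (a b : 'I_m -> R) :
  \sum_i a i * b i <= Num.sqrt (\sum_i a i ^+ 2) * Num.sqrt (\sum_i b i ^+ 2).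
Proof.
have := @CS_lb a (fun i => - b i) (Num.sqrt (\sum_i b i ^+ 2)) (sqrtr_ge0 _).
rewrite sqr_sqrtr ?sum_sq_ge0 //.
have -> : \sum_i (- b i) ^+ 2 = \sum_i b i ^+ 2 by apply: eq_bigr => i _; rewrite sqrrN.
have -> : \sum_i a i * - b i = - \sum_i a i * b i by rewrite -sumrN; apply: eq_bigr => i _; rewrite mulrN.
move=> /(_ (lexx _)); rewrite lerN2 mulrC //.
Qed.

Lemma minkowski (f g : 'I_m -> R) :
  Num.sqrt (\sum_i (f i + g i) ^+ 2) <=
  Num.sqrt (\sum_i f i ^+ 2) + Num.sqrt (\sum_i g i ^+ 2).
Proof.
set A := Num.sqrt (\sum_i f i ^+ 2); set B := Num.sqrt (\sum_i g i ^+ 2).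
have hA : 0 <= A by apply: sqrtr_ge0.
have hB : 0 <= B by apply: sqrtr_ge0.
rewrite -[A + B]ger0_norm ?addr_ge0 // -sqrtr_sqr ler_sqrt ?sqr_ge0 //.
have -> : \sum_i (f i + g i) ^+ 2 = \sum_i f i ^+ 2 + 2 * \sum_i f i * g i + \sum_i g i ^+ 2.
  rewrite mulr_sumr -!big_split /=; apply: eq_bigr => i _; ring.
have hA2 : A ^+ 2 = \sum_i f i ^+ 2 by rewrite sqr_sqrtr // sum_sq_ge0.
have hB2 : B ^+ 2 = \sum_i g i ^+ 2 by rewrite sqr_sqrtr // sum_sq_ge0.
rewrite -hA2 -hB2; have := CS_ub f g; rewrite -/A -/B => h; nra.
Qed.

End Aux.

Section Mx.
Variables (R : realType) (m : nat).

Lemma chol_unit (Sigma U : 'M[R]_m) : cholesky_factor Sigma U ->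
  U^T \in unitmx /\ Sigma \in unitmx.
Proof.
move=> [hS [hlow hdiag]].
have ht : is_trig_mx U^T.
  apply/forallP => i; apply/forallP => j; apply/implyP => hij.
  by rewrite mxE; apply/eqP; apply: hlow.
have hd : 0 < \det U^T.
  rewrite det_trig //; apply: prodr_gt0 => i _; by rewrite mxE.
have hu : U^T \in unitmx by rewrite unitmxE unitf_gt0.
split => //; rewrite hS unitmxE det_mulmx -[\det U](det_tr U).
by apply: unitf_gt0; apply: mulr_gt0.
Qed.

Lemma chol_id (Sigma U : 'M[R]_m) : cholesky_factor Sigma U ->
  U *m invmx Sigma *m U^T = 1%:M.
Proof.
move=> hc; have [hUt hSu] := chol_unit hc; have [hS _] := hc.
have h1 : invmx U^T *m U^T = 1%:M := mulVmx hUt.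
transitivity (invmx U^T *m (U^T *m U *m invmx Sigma) *m U^T).
  by rewrite !mulmxA h1 mul1mx.
by rewrite -hS mulmxV // mulmx1 h1.
Qed.

Lemma quad_eq (Sigma U : 'M[R]_m) (y : 'cV[R]_m) : cholesky_factor Sigma U ->
  ((U^T *m y)^T *m invmx Sigma *m (U^T *m y)) 0 0 = \sum_i y i 0 ^+ 2.
Proof.
move=> hc; rewrite trmx_mul trmxK.
have -> : y^T *m U *m invmx Sigma *m (U^T *m y) = y^T *m (U *m invmx Sigma *m U^T) *m y.
  by rewrite !mulmxA.
rewrite chol_id // mulmx1 mxE; apply: eq_bigr => i _; by rewrite mxE.
Qed.

Lemma dotpD (c x z : 'cV[R]_m) : dotp c (x + z) = dotp c x + dotp c z.
Proof. by rewrite /dotp mulmxDr mxE. Qed.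

Lemma dotpU (c y : 'cV[R]_m) (U : 'M[R]_m) :
  dotp c (U^T *m y) = \sum_i (U *m c) i 0 * y i 0.
Proof. by rewrite -dotpE /dotp mulmxA -trmx_mul. Qed.

Lemma inf_eq (Sigma U : 'M[R]_m) (xt b : 'cV[R]_m) (kappa w : R) :
  cholesky_factor Sigma U -> 0 <= kappa -> 0 <= w ->
  inf [set w * dotp b x | x in ellipsoid Sigma xt kappa] =
  dotp (w *: b) xt - kappa * norm2 (U *m (w *: b)).
Proof.
move=> hc hk hw.
have [hUt hSu] := chol_unit hc.
set c := w *: b; set a := U *m c; set N := norm2 a.
have hwd : forall x, w * dotp b x = dotp c x.
  by move=> x; rewrite /dotp /c !mxE mulr_sumr; apply: eq_bigr => i _; rewrite !mxE mulrA.
set E := [set w * dotp b x | x in ellipsoid Sigma xt kappa]%classic.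
have lb : lbound E (dotp c xt - kappa * N).
  move=> _ [x hx <-]; rewrite hwd.
  set y := invmx U^T *m (x - xt).
  have hxy : x = xt + U^T *m y by rewrite /y mulKVmx // addrC subrK.
  move: hx; rewrite /ellipsoid /= hxy addrC addKr quad_eq // => hy.
  rewrite dotpD dotpU lerD2l.
  exact: (CS_lb (fun i => a i 0) hk hy).
set ys := (- (kappa / N)) *: a.
have mem : E (dotp c xt - kappa * N).
  exists (xt + U^T *m ys).
    rewrite /ellipsoid /= addrC addKr quad_eq //.
    have -> : \sum_i ys i 0 ^+ 2 = (kappa / N) ^+ 2 * N ^+ 2.
      rewrite /N /norm2 sqr_sqrtr ?sum_sq_ge0 // mulr_sumr.
      by apply: eq_bigr => i _; rewrite /ys mxE exprMn sqrrN.
    case: (eqVneq N 0) => [->|hN]; first by rewrite expr0n /= mulr0 sqr_ge0.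
    by rewrite -exprMn divfK.
  rewrite hwd dotpD dotpU.
  have -> : \sum_i a i 0 * ys i 0 = - (kappa / N) * N ^+ 2.
    rewrite /N /norm2 sqr_sqrtr ?sum_sq_ge0 // mulr_sumr.
    by apply: eq_bigr => i _; rewrite /ys !mxE mulrCA.
  case: (eqVneq N 0) => [->|hN]; first by rewrite expr0n /= !mulr0 oppr0.
  congr (_ + _); rewrite expr2 mulNr mulrA divfK //.
apply/le_anti/andP; split.
  by apply: ge_inf => //; exists (dotp c xt - kappa * N).
by apply: lb_le_inf => //; exists (dotp c xt - kappa * N).
Qed.

End Mx.

Section Main2.
Variables (R : realType) (m : nat).

Lemma Robj_eq (Sigma U : 'M[R]_m) (xt bh b : 'cV[R]_m) (kappa lambda w : R) :
  cholesky_factor Sigma U -> 0 <= kappa -> 0 <= w ->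
  R_obj Sigma xt kappa lambda bh w b = S_obj U xt kappa lambda bh (w *: b).
Proof.
move=> hc hk hw; rewrite /R_obj /S_obj (inf_eq _ _ hc hk hw).
by rewrite addrAC.
Qed.

Lemma sum1Z (c : R) (b : 'cV[R]_m) : sum1 (c *: b) = c * sum1 b.
Proof. by rewrite /sum1 mulr_sumr; apply: eq_bigr => i _; rewrite mxE. Qed.

Lemma sum_delta (f : 'I_m -> R) (i : 'I_m) :
  \sum_j f j * (delta_mx i 0 : 'cV[R]_m) j 0 = f i.
Proof.
rewrite (bigD1 i) //= big1 ?addr0 => [|j hj]; rewrite mxE ?eqxx ?mulr1 //.
by rewrite (negbTE hj) mulr0.
Qed.


Lemma diag_eq (Sigma U : 'M[R]_m) (j : 'I_m) : cholesky_factor Sigma U ->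
  Sigma j j = \sum_k U k j ^+ 2.
Proof.
move=> [hS _]; rewrite hS mxE; apply: eq_bigr => k _; by rewrite mxE expr2.
Qed.

Lemma col_le_sigma (Sigma U : 'M[R]_m) (i : 'I_m) : cholesky_factor Sigma U ->
  Num.sqrt (\sum_k U k i ^+ 2) <= sigma_tot Sigma.
Proof.
move=> hc; rewrite /sigma_tot -(diag_eq i hc) ler_sqrt; last first.
  by apply: sumr_ge0 => j _; rewrite (diag_eq j hc) sum_sq_ge0.
rewrite (bigD1 i) //= lerDl; apply: sumr_ge0 => j _; by rewrite (diag_eq j hc) sum_sq_ge0.
Qed.

End Main2.

Unset Implicit Arguments. Set Strict Implicit.
Theorem theorem2 (R : realType) (m : nat) (hm : (0 < m)%N)
  (xt bh : 'cV[R]_m) (lambda gamma kappa : R) (Sigma U : 'M[R]_m)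
  (hbh : simplex bh) (hlambda : 0 < lambda)
  (hgamma0 : 0 <= gamma) (hgamma1 : gamma < 1) (hkappa : 0 <= kappa)
  (hSigma : sym_pos_def Sigma) (hU : cholesky_factor Sigma U)
  (hmax : exists i : 'I_m, kappa * sigma_tot Sigma + lambda < xt i 0)
  (bs : 'cV[R]_m) (hbs : S_optimal U xt kappa lambda gamma bh bs) :
  R_optimal Sigma xt kappa lambda gamma bh (sum1 bs) ((sum1 bs)^-1 *: bs).
Proof.
move: hbs => [[hbsn hbsf] hopt].
set w0 := sum1 bs.
have hw0 : 0 <= w0 by apply: sumr_ge0 => j _; apply: hbsn.
have hbh1 : norm1 bh = 1.
  case: hbh => hbn <-; apply: eq_bigr => j _; by rewrite ger0_norm.
have heq : w0 + gamma * norm1 (bh - bs) = 1.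
  apply/le_anti; rewrite hbsf /= leNgt; apply/negP => hlt.
  case: hmax => i hi.
  set sig := sigma_tot Sigma in hi.
  set n0 := norm1 (bh - bs) in hlt hbsf.
  set s := 1 - (w0 + gamma * n0).
  have sE : s = 1 - (w0 + gamma * n0) by [].
  have hs : 0 < s by rewrite subr_gt0.
  set eps := s / (1 + gamma).
  have h1g : 0 < 1 + gamma by lra.
  have heps : 0 < eps by rewrite divr_gt0.
  have hepsg : eps * (1 + gamma) = s by rewrite divfK // gt_eqF.
  set e := delta_mx i 0 : 'cV[R]_m.
  set b' := bs + eps *: e.
  have hb'E : forall j, b' j 0 = bs j 0 + eps * e j 0 by move=> j; rewrite !mxE.
  have he0 : forall j, 0 <= e j 0 by move=> j; rewrite mxE ler0n.
  have hsum : sum1 b' = w0 + eps.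
    have hd : \sum_j eps * e j 0 = eps := sum_delta (fun _ => eps) i.
    rewrite /sum1 (eq_bigr _ (fun j _ => hb'E j)) big_split /= hd //.
  have hn1 : norm1 (bh - b') <= n0 + eps.
    have hd : \sum_j eps * e j 0 = eps := sum_delta (fun _ => eps) i.
    rewrite -[X in _ <= _ + X]hd /n0 /norm1 -big_split /=; apply: ler_sum => j _.
    have -> : (bh - b') j 0 = (bh - bs) j 0 - eps * e j 0.
      by rewrite [LHS]mxE [(- b') j 0]mxE hb'E !mxE opprD addrA.
    apply: le_trans (ler_normB _ _) _.
    by rewrite (ger0_norm (mulr_ge0 (ltW heps) (he0 j))).
  have hfeas : S_feasible gamma bh b'.
    split.
      by move=> j; rewrite hb'E; apply: addr_ge0 (hbsn j) (mulr_ge0 (ltW heps) (he0 j)).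
    rewrite hsum; have := ler_wpM2l hgamma0 hn1; lra.
  have hdot : dotp b' xt = dotp bs xt + eps * xt i 0.
    have hd : \sum_j (eps * xt j 0) * e j 0 = eps * xt i 0 := sum_delta (fun j => eps * xt j 0) i.
    rewrite !dotpE -hd -big_split /=; apply: eq_bigr => j _; rewrite hb'E; ring.
  have hUe : forall k, (U *m b') k 0 = (U *m bs) k 0 + eps * U k i.
    move=> k; rewrite mulmxDr -scalemxAr mxE [X in _ + X]mxE; congr (_ + _ * _).
    by rewrite mxE (sum_delta (fun j => U k j) i).
  have hN : norm2 (U *m b') <= norm2 (U *m bs) + eps * sig.
    rewrite /norm2 (eq_bigr _ (fun k _ => congr1 (fun z => z ^+ 2) (hUe k))).
    apply: le_trans (minkowski _ _) _; rewrite lerD2l.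
    have -> : \sum_k (eps * U k i) ^+ 2 = eps ^+ 2 * \sum_k U k i ^+ 2.
      by rewrite mulr_sumr; apply: eq_bigr => k _; rewrite exprMn.
    rewrite sqrtrM ?sqr_ge0 // sqrtr_sqr (ger0_norm (ltW heps)).
    by rewrite ler_wpM2l ?(ltW heps) // col_le_sigma.
  have := hopt b' hfeas; rewrite /S_obj hdot.
  have := ler_wpM2l (ltW hlambda) hn1.
  have := ler_wpM2l hkappa hN.
  have hd : 0 < xt i 0 - (kappa * sig + lambda) by rewrite subr_gt0.
  have hp := mulr_gt0 heps hd.
  rewrite -/n0 => h1 h2 h3; lra.
have hw0p : 0 < w0.
  rewrite lt_def hw0 andbT; apply/eqP => h0.
  have bs0 : forall j, bs j 0 = 0.
    by move=> j; apply: (@psumr_eq0P _ _ predT (fun j => bs j 0) (fun j _ => hbsn j) h0 j isT).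
  have hn : norm1 (bh - bs) = 1.
    rewrite -hbh1; apply: eq_bigr => j _; by rewrite !mxE bs0 subr0.
  rewrite h0 hn in heq; lra.
have hc := hU.
split.
  split=> //; split.
    by move=> j; rewrite mxE mulr_ge0 ?invr_ge0.
  split; first by rewrite scalerA mulfV ?gt_eqF // scale1r.
  by rewrite sum1Z mulVf ?gt_eqF.
move=> w' b' [hw' [hb'n [hb'eq hb'1]]].
rewrite (Robj_eq _ _ _ _ hc hkappa hw') (Robj_eq _ _ _ _ hc hkappa hw0).
rewrite scalerA mulfV ?gt_eqF // scale1r.
apply: hopt; split.
  by move=> j; rewrite mxE mulr_ge0.
by rewrite sum1Z hb'1 mulr1 hb'eq.
Qed.
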